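(* Let $(S,\le,\to,|\cdot|,\Pr)$ be a closed stochastic well-structured transition system, let $T\subseteq S$ be upward-closed, and let $X_0,X_1,\dots$ be an execution of the system. Let $\tau$ be the first time at which $X_\tau\in T$ or $X_\tau\notin\mathrm{Pred}^*(T)$. Then there is a constant $k$ (independent of $X_0$) such that $\mathbb{E}[\tau]=O(|X_0|^k)$, where the implied constant is also independent of $X_0$.
   Context: A quasi-order is a reflexive, transitive relation. A well-quasi-order (wqo) $\le$ on a set $S$ is a quasi-order such that every infinite sequence $x_0,x_1,\dots$ in $S$ has indices $i<j$ with $x_i\le x_j$. A set $T\subseteq S$ is upward-closed if $x\in T$ and $x\le y$ imply $y\in T$. A well-structured transition system (WSTS) $(S,\le,\to)$ is a set $S$ of configurations with a wqo $\le$ and a binary transition relation $\to$ that is compatible with $\le$: whenever $s\to s'$ and $s\le t$, there exists $t'$ with $t\to t'$ and $s'\le t'$. A stochastic WSTS (SWSTS) $(S,\le,\to,|\cdot|,\Pr)$ is a WSTS together with a function assigning each configuration $s$ a positive weight $|s|$ and a transition probability $\Pr[s\to s']$ to each transition, making an execution $X_0,X_1,\dots$ a Markov chain with $\Pr[X_{i+1}=s'\mid X_i=s]=\Pr[s\to s']$; it is required (polynomial transition probabilities) that for each transition $s\to s'$ there are constants $k_0\ge 0$, $c_0>0$ such that for every configuration $t\ge s$, $\Pr[X_{i+1}\ge s'\mid X_i=t]\ge c_0|t|^{-k_0}$. The SWSTS is closed if $s\to s'$ implies $|s|=|s'|$. $\mathrm{Pred}^*(T)$ is the set of configurations from which some element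 of $T$ is reachable by a finite (possibly empty) sequence of transitions. *)

(* Defs.v *)
From HB Require Import structures.
From mathcomp Require Import all_boot all_order all_algebra.
From mathcomp Require Import all_classical all_reals all_analysis.
Set Implicit Arguments. Unset Strict Implicit. Unset Printing Implicit Defensive.
Import Order.TTheory GRing.Theory Num.Theory.
Local Open Scope classical_set_scope.
Local Open Scope ring_scope.

Section SWSTS.
Context {R : realType} {S : choiceType}.

Definition quasi_order (le : S -> S -> Prop) : Prop :=
  (forall x, le x x) /\ (forall x y z, le x y -> le y z -> le x z).

Definition wqo (le : S -> S -> Prop) : Prop :=
  quasi_order le /\
  forall f : nat -> S, exists i j, (i < j)%N /\ le (f i) (f j).

Definition upward_closed (le : S -> S -> Prop) (T : set S) : Prop :=
  forall x y, T x -> le x y -> T y.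

Definition compatible (le step : S -> S -> Prop) : Prop :=
  forall s s' t, step s s' -> le s t -> exists t', step t t' /\ le s' t'.

Definition WSTS (le step : S -> S -> Prop) : Prop :=
  wqo le /\ compatible le step.

Inductive reach (step : S -> S -> Prop) : S -> S -> Prop :=
| reach_refl s : reach step s s
| reach_step s s' s'' : step s s' -> reach step s' s'' -> reach step s s''.

Definition Pred_star (step : S -> S -> Prop) (T : set S) : set S :=
  [set s | exists t, T t /\ reach step s t].

(* Stochastic WSTS: weights w, transition probabilities P s s' = Pr[s -> s']. *)
Definition SWSTS (le step : S -> S -> Prop) (w : S -> R) (P : S -> S -> R)
  : Prop :=
  [/\ WSTS le step,
      (forall s, 0 < w s),
      (forall s s', 0 <= P s s') /\
      (forall s s', 0 < P s s' <-> step s s'),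
      (forall s, (exists s', step s s') ->
          (\esum_(s' in [set: S]) (P s s')%:E = 1)%E) &
      (forall s s', step s s' -> exists k0 c0 : R, 0 <= k0 /\ 0 < c0 /\
         forall t, le s t ->
           ((c0 * (w t `^ (- k0)))%:E <=
              \esum_(t' in [set t' | le s' t']) (P t t')%:E)%E)].

Definition closed_SWSTS (le step : S -> S -> Prop) (w : S -> R)
  (P : S -> S -> R) : Prop :=
  SWSTS le step w P /\ (forall s s', step s s' -> w s = w s').

Definition stopped (step : S -> S -> Prop) (T : set S) (s : S) : Prop :=
  T s \/ ~ Pred_star step T s.

(* surv P step T n s = Pr[tau > n | X_0 = s] for the Markov chain with
   transition probabilities P *)
Fixpoint surv (step : S -> S -> Prop) (P : S -> S -> R) (T : set S)
  (n : nat) (s : S) : \bar R :=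
  if `[< stopped step T s >] then 0%E else
  match n with
  | 0 => 1%E
  | n'.+1 => (\esum_(s' in [set: S]) ((P s s')%:E * surv step P T n' s'))%E
  end.

(* E[tau | X_0 = s] = sum_{n >= 0} Pr[tau > n | X_0 = s] *)
Definition expected_tau (step : S -> S -> Prop) (P : S -> S -> R)
  (T : set S) (s : S) : \bar R :=
  (\sum_(n <oo) surv step P T n s)%E.

End SWSTS.

(* Main.v *)
Require Import Defs.
From HB Require Import structures.
From mathcomp Require Import all_boot all_order all_algebra.
From mathcomp Require Import all_classical all_reals all_analysis.
From mathcomp Require Import ring lra.
Import Order.TTheory GRing.Theory Num.Theory.
Local Open Scope classical_set_scope.
Local Open Scope ring_scope.
Set Implicit Arguments. Unset Strict Implicit.

Section Basis.
Context {S : choiceType}.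

Lemma finite_basis (le : S -> S -> Prop) (U : set S) :
  (forall f : nat -> S, exists i j, (i < j)%N /\ le (f i) (f j)) ->
  exists bs : seq S, (forall b, b \in bs -> U b) /\
     forall x, U x -> exists2 b, b \in bs & le b x.
Proof.
move=> W.
apply: contrapT => /forallNP H.
have Hne : forall bs : seq S, (forall b, b \in bs -> U b) ->
    exists x, U x /\ forall b, b \in bs -> ~ le b x.
  move=> bs Hbs; have /not_andP [//|] := H bs.
  move=> /existsNP [x] /not_implyP [Ux Hx]; exists x; split => // b bb lbx.
  by apply: Hx; exists b.
have [u Uu] : exists u, U u.
  have [b|x [Ux _]] := Hne [::]; first by rewrite in_nil.
  by exists x.
have [F HF] : exists F : seq S -> S, forall bs,
    (forall b, b \in bs -> U b) -> U (F bs) /\ forall b, b \in bs -> ~ le b (F bs).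
  suff [F0 HF0] : {F0 : seq S -> S & forall bs, (forall b, b \in bs -> U b) ->
     U (F0 bs) /\ forall b, b \in bs -> ~ le b (F0 bs)} by exists F0.
  apply: (@choice _ _ (fun bs x => (forall b, b \in bs -> U b) ->
     U x /\ forall b, b \in bs -> ~ le b x)) => bs.
  have [Hbs|Hbs] := pselect (forall b, b \in bs -> U b).
    by have [x Hx] := Hne bs Hbs; exists x.
  by exists u.
pose g := fix g n := if n is n'.+1 then F (g n') :: g n' else [::].
have gU : forall n b, b \in g n -> U b.
  elim=> [|n IH] b //=; rewrite inE => /orP [/eqP ->|]; last exact: IH.
  by case: (HF (g n) (IH)).
have gin : forall i j, (i < j)%N -> F (g i) \in g j.
  move=> i; elim=> [//|j IH]; rewrite ltnS leq_eqVlt => /orP [/eqP ->|/IH].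
    by rewrite /= mem_head.
  by move=> h; rewrite /= in_cons h orbT.
have [i [j [ij lij]]] := W (fun n => F (g n)).
by case: (HF (g j) (gU j)) => _ /(_ _ (gin i j ij)).
Qed.

End Basis.

Lemma esumZ_le (R : realType) (S : choiceType) (I : set S) (c : R) (a : S -> \bar R) :
  0 <= c -> (forall i, (0 <= a i)%E) ->
  (\esum_(i in I) (c%:E * a i) <= c%:E * \esum_(i in I) a i)%E.
Proof.
move=> c0 a0; apply: ge_ereal_sup => _ [X [finX XI]] <-.
rewrite -ge0_mule_fsumr //; apply: lee_wpmul2l; first by rewrite lee_fin.
by apply: ereal_sup_ubound; exists X.
Qed.

Lemma fin_split (R : realType) (a e : \bar R) :
  (0 <= a)%E -> (0 <= e)%E -> (a + e = 1)%E ->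
  exists ar er : R, a = ar%:E /\ e = er%:E.
Proof.
by case: a => [ar| |]; case: e => [er| |] //=; exists ar, er.
Qed.

Section Main.
Variables (R : realType) (S : choiceType)
  (le step : S -> S -> Prop) (w : S -> R) (P : S -> S -> R) (T : set S).
Hypothesis Hcomp : compatible le step.
Hypothesis HP0 : forall s s', 0 <= P s s'.
Hypothesis HPstep : forall s s', 0 < P s s' <-> step s s'.
Hypothesis Hsum : forall s, (exists s', step s s') ->
          (\esum_(s' in [set: S]) (P s s')%:E = 1)%E.
Hypothesis Hpoly : forall s s', step s s' -> exists k0 c0 : R, 0 <= k0 /\ 0 < c0 /\
         forall t, le s t ->
           ((c0 * (w t `^ (- k0)))%:E <=
              \esum_(t' in [set t' | le s' t']) (P t t')%:E)%E.
Hypothesis Hclosed : forall s s', step s s' -> w s = w s'.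
Hypothesis HT : upward_closed le T.

Lemma reach_compat y z : reach step y z -> forall t, le y t ->
  exists z', reach step t z' /\ le z z'.
Proof.
elim=> [s|s s' s'' st _ IH] t lst; first by exists t; split => //; constructor.
have [t' [tt' lt']] := Hcomp st lst.
have [z' [rz' lz']] := IH _ lt'.
by exists z'; split => //; apply: reach_step rz'.
Qed.

Lemma pred_up : upward_closed le (Pred_star step T).
Proof.
move=> x y [z [Tz rz]] lxy.
have [z' [rz' lz']] := reach_compat rz lxy.
by exists z'; split => //; apply: HT Tz lz'.
Qed.

Lemma notstopped_succ s : ~ stopped step T s -> exists s', step s s'.
Proof.
move=> /not_orP [nT /contrapT [z [Tz rz]]].
case: rz Tz nT => [//|a b c ab _ _ _]; by exists b.
Qed.

Local Notation surv := (surv step P T).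

Lemma surv_stopped n s : stopped step T s -> surv n s = 0%E.
Proof. by move=> H; case: n => [|n] /=; rewrite asboolT. Qed.

Lemma surv_succ n s : ~ stopped step T s ->
  surv n.+1 s = (\esum_(s' in [set: S]) ((P s s')%:E * surv n s'))%E.
Proof. by move=> H /=; rewrite asboolF. Qed.

Lemma surv_ge0 n s : (0 <= surv n s)%E.
Proof.
elim: n s => [|n IH] s /=; case: ifP => // _.
by apply: esum_ge0 => x _; apply: mule_ge0; rewrite ?lee_fin.
Qed.

Lemma surv_le1 n s : (surv n s <= 1)%E.
Proof.
elim: n s => [|n IH] s.
  by rewrite /=; case: ifP.
have [st|nst] := pselect (stopped step T s); first by rewrite surv_stopped.
rewrite surv_succ // -(Hsum (notstopped_succ nst)).
apply: le_esum => x _; rewrite -[X in (_ <= X)%E]mule1.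
by apply: lee_wpmul2l; rewrite ?lee_fin.
Qed.


Definition hyp n (B W : R) := forall s r, w s = W -> (surv (n + r) s <= B%:E)%E.
Definition Good y L (c : R) K := forall W, 1 <= W -> forall n B, 0 <= B ->
  hyp n B W -> forall t, le y t -> w t = W ->
  (surv (n + L) t <= ((1 - c / W ^+ K) * B)%:E)%E.

Lemma frac01 (c W : R) K : 1 <= W -> 0 < c <= 1 -> 0 <= c / W ^+ K <= 1.
Proof.
move=> W1 /andP [c0 c1]; have W0 : 0 < W by apply: lt_le_trans W1.
apply/andP; split; first by apply: divr_ge0; [apply: ltW|apply/ltW/exprn_gt0].
rewrite -[1]mulr1; apply: ler_pM => //; first exact: ltW.
  by rewrite invr_ge0; apply/ltW/exprn_gt0.
by rewrite invf_le1 ?exprn_ege1 // exprn_gt0.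
Qed.

Lemma good_path y z : reach step y z -> T z ->
  exists L c K, (0 < c <= 1) /\ Good y L c K.
Proof.
elim=> [s|s s' s'' st _ IH] Tz.
  exists 0%N, 1, 0%N; split; first by rewrite ltr01 lexx.
  move=> W W1 n B B0 _ t lst _.
  rewrite surv_stopped; last by left; exact: HT Tz lst.
  by rewrite expr0 divr1 subrr mul0r.
have [L' [c' [K' [c'01 G']]]] := IH Tz.
have [k0 [c0 [k00 [c00 Hk]]]] := Hpoly st.
pose K0 := (Num.truncn k0).+1.
have k0K : k0 <= K0%:R by apply/ltW/truncnS_gt.
have m01 : 0 < Num.min 1 c0 <= 1.
  by rewrite lt_min ltr01 c00 /= ge_min lexx.
exists L'.+1, (Num.min 1 c0 * c'), (K0 + K')%N; split.
  case/andP: m01 => m0 m1; case/andP: c'01 => c0' c1'.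
  by rewrite mulr_gt0 //= mulr_ile1 // ltW.
move=> W W1 n B B0 Hh t lst wt.
have W0 : 0 < W by apply: lt_le_trans W1.
pose p' := c' / W ^+ K'. pose q0 := Num.min 1 c0 / W ^+ K0.
have -> : Num.min 1 c0 * c' / W ^+ (K0 + K') = q0 * p'.
  by rewrite exprD invfM mulrACA.
have /andP [p'0 p'1] : 0 <= p' <= 1 by apply: frac01.
have /andP [q00 q01] : 0 <= q0 <= 1 by apply: frac01.
have q0q : q0 <= c0 * w t `^ (- k0).
  rewrite wt /q0; apply: ler_pM => //.
  - by case/andP: m01 => /ltW.
  - by rewrite invr_ge0; apply/ltW/exprn_gt0.
  - by rewrite ge_min lexx orbT.
  rewrite -powR_mulrn ?(ltW W0) // -powRN; apply: ler_powR => //.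
  by rewrite lerN2.
rewrite addnS.
have [stt|nst] := pselect (stopped step T t).
  rewrite surv_stopped // lee_fin; apply: mulr_ge0 => //.
  by rewrite subr_ge0 mulr_ile1.
rewrite surv_succ //.
have [t' [tt' _]] := Hcomp st lst.
have Hs := Hsum (ex_intro _ t' tt').
rewrite (esumID [set x | le s' x]); last first.
  by move=> i _; apply: mule_ge0; [rewrite lee_fin|apply: surv_ge0].
rewrite (esumID [set x | le s' x]) in Hs; last by move=> i _; rewrite lee_fin.
rewrite !setTI in Hs *.
have Ha := Hk t lst.
set a := (\esum_(i in [set x | le s' x]) (P t i)%:E)%E in Hs Ha *.
set e := (\esum_(i in ~` [set x | le s' x]) (P t i)%:E)%E in Hs *.
have a0 : (0 <= a)%E by apply: esum_ge0 => i _; rewrite lee_fin.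
have e0 : (0 <= e)%E by apply: esum_ge0 => i _; rewrite lee_fin.
have le1 : (\esum_(i in [set x | le s' x]) ((P t i)%:E * surv (n + L') i)
    <= ((1 - p') * B)%:E * a)%E.
  apply: le_trans (@esumZ_le _ _ [set x | le s' x] ((1 - p') * B) (fun i => (P t i)%:E) _ _); last 2 first.
  - by apply: mulr_ge0 => //; rewrite subr_ge0.
  - by move=> i; rewrite lee_fin.
  apply: le_esum => x Ux.
  have [Px0|Pxpos] := eqVneq (P t x) 0; first by rewrite Px0 mul0e mule0.
  have stx : step t x by apply/HPstep; rewrite lt_def Pxpos HP0.
  rewrite muleC; apply: lee_wpmul2r; first by rewrite lee_fin.
  by apply: (G' W W1 n B B0 Hh x Ux); rewrite -(Hclosed stx).
have le2 : (\esum_(i in ~` [set x | le s' x]) ((P t i)%:E * surv (n + L') i)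
    <= B%:E * e)%E.
  apply: le_trans (@esumZ_le _ _ (~` [set x | le s' x]) B (fun i => (P t i)%:E) _ _); last 2 first.
  - by [].
  - by move=> i; rewrite lee_fin.
  apply: le_esum => x Ux.
  have [Px0|Pxpos] := eqVneq (P t x) 0; first by rewrite Px0 mul0e mule0.
  have stx : step t x by apply/HPstep; rewrite lt_def Pxpos HP0.
  rewrite muleC; apply: lee_wpmul2r; first by rewrite lee_fin.
  by apply: Hh; rewrite -(Hclosed stx).
apply: le_trans (leeD le1 le2) _.
have [ar [er [Ea Ee]]] := fin_split a0 e0 Hs.
rewrite Ea Ee in Hs Ha *.
move: Hs Ha; rewrite -EFinD => /eqP; rewrite eqe => /eqP hae.
rewrite lee_fin => Ha.
rewrite -!EFinM -EFinD lee_fin.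
have Hq : q0 <= ar by apply: le_trans Ha.
have : 0 <= p' * B * (ar - q0) by apply: mulr_ge0; [apply: mulr_ge0|rewrite subr_ge0].
have -> : er = 1 - ar by rewrite -hae addrAC subrr add0r.
move=> h; nra.
Qed.


Lemma good_mono y L c K L' c' K' : Good y L c K -> (L <= L')%N ->
  0 < c' <= c -> (K <= K')%N -> Good y L' c' K'.
Proof.
move=> G LL /andP [c'0 cc] KK W W1 n B B0 Hh t lyt wt.
have W0 : 0 < W by apply: lt_le_trans W1.
have -> : (n + L')%N = ((n + (L' - L)) + L)%N by rewrite -addnA subnK.
apply: le_trans (G W W1 _ B B0 _ t lyt wt) _.
  by move=> s r ws; rewrite -addnA; exact: Hh.
rewrite lee_fin ler_wpM2r // lerD2l lerN2.
apply: ler_pM => //; first exact: ltW.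
  by rewrite invr_ge0; apply/ltW/exprn_gt0.
rewrite lef_pV2 ?posrE ?exprn_gt0 //.
exact: ler_weXn2l.
Qed.

Lemma good_list (bs : seq S) : (forall b, b \in bs -> Pred_star step T b) ->
  exists L c K, (0 < c <= 1) /\ forall b, b \in bs -> Good b L c K.
Proof.
elim: bs => [|b bs IH] H.
  by exists 0%N, 1, 0%N; split; [rewrite ltr01 lexx|].
have H' : forall b', b' \in bs -> Pred_star step T b'.
  by move=> b' hb; apply: H; rewrite in_cons hb orbT.
have [L [c [K [/andP [c0 c1] G]]]] := IH H'.
have [z [Tz rz]] := H b (mem_head _ _).
have [L1 [c1' [K1 [/andP [c10 c11] G1]]]] := good_path rz Tz.
exists (maxn L L1), (Num.min c c1'), (maxn K K1); split.
  by rewrite lt_min c0 c10 /= ge_min c1.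
have mp : 0 < Num.min c c1' by rewrite lt_min c0 c10.
move=> b'; rewrite in_cons => /orP [/eqP ->|hb].
  apply: good_mono G1 _ _ _; rewrite ?leq_maxr //.
  by rewrite mp /= ge_min lexx orbT.
apply: good_mono (G b' hb) _ _ _; rewrite ?leq_maxl //.
by rewrite mp /= ge_min lexx.
Qed.

Lemma hyp_step (bs : seq S) L c K :
  (forall x, Pred_star step T x -> exists2 b, b \in bs & le b x) ->
  0 < c <= 1 -> (forall b, b \in bs -> Good b L c K) ->
  forall W, 1 <= W -> forall n B, 0 <= B -> hyp n B W ->
  hyp (n + L) ((1 - c / W ^+ K) * B) W.
Proof.
move=> Hb c01 G W W1 n B B0 Hh s r ws.
have /andP [p0 p1] := frac01 K W1 c01.
have [st|nst] := pselect (stopped step T s).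
  by rewrite surv_stopped // lee_fin mulr_ge0 // subr_ge0.
have Ps : Pred_star step T s by move: nst => /not_orP [_ /contrapT].
have [b bb lbs] := Hb s Ps.
rewrite addnAC; apply: (G b bb W W1 (n + r)%N B B0 _ s lbs ws).
by move=> s' r' ws'; rewrite -addnA; exact: Hh.
Qed.

Lemma geom_sum (p : R) m : 0 < p <= 1 ->
  \sum_(0 <= i < m) (1 - p) ^+ i <= p^-1.
Proof.
move=> /andP [p0 p1].
have E : p * \sum_(0 <= i < m) (1 - p) ^+ i = 1 - (1 - p) ^+ m.
  elim: m => [|m IH]; first by rewrite big_nil mulr0 expr0 subrr.
  by rewrite big_nat_recr //= mulrDr IH exprS; ring.
rewrite -(ler_pM2l p0) E mulfV ?gt_eqF // lerBlDr lerDl.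
by rewrite exprn_ge0 // subr_ge0.
Qed.

Lemma block_sum (q : R) L1 m : (0 < L1)%N ->
  \sum_(0 <= k < m * L1) q ^+ (k %/ L1) = L1%:R * \sum_(0 <= i < m) q ^+ i.
Proof.
move=> L0; elim: m => [|m IH]; first by rewrite mul0n !big_nil mulr0.
rewrite mulSnr (big_cat_nat _ (n := (m * L1)%N)) //= ?leq_addr // IH.
rewrite big_nat_recr //= mulrDr; congr (_ + _).
have -> : (m * L1 + L1)%N = (0 + m * L1 + L1)%N by rewrite add0n.
rewrite -{1}[(m * L1)%N]add0n big_addn.
have -> : (0 + m * L1 + L1 - m * L1 = L1)%N by rewrite add0n addKn.
rewrite (eq_big_nat _ _ (F2 := fun _ => q ^+ m)); last first.
  by move=> i /andP [_ iL]; rewrite addnC divnMDl // (divn_small iL) addn0.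
by rewrite sumr_const_nat subn0 mulr_natl.
Qed.

End Main.


Theorem theorem4 (R : realType) (S : choiceType)
  (le step : S -> S -> Prop) (w : S -> R) (P : S -> S -> R) (T : set S) :
  closed_SWSTS le step w P ->
  upward_closed le T ->
  exists (k : nat) (C N : R), 0 < C /\
    forall x0 : S, N <= w x0 ->
      (expected_tau step P T x0 <= (C * w x0 ^+ k)%:E)%E.
Proof.
move=> [[[[_ Hwqo] Hcomp] Hw0 [HP0 HPstep] Hsum Hpoly] Hclosed] HT.
have [bs [bsP bsB]] := finite_basis (Pred_star step T) Hwqo.
have [L [c [K [c01 G]]]] := good_list Hcomp HP0 HPstep Hsum Hpoly Hclosed HT bsP.
pose L1 := L.+1.
have /andP [c0 c1] := c01.
have G1 : forall b, b \in bs -> Good le step w P T b L1 c K.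
  by move=> b hb; apply: good_mono (G b hb) _ _ _ => //; rewrite lexx andbT.
exists K, (L1%:R / c), 1; split; first by rewrite divr_gt0 // ltr0n.
move=> x0 W1.
set W := w x0 in W1 *.
have W0 : 0 < W by apply: lt_le_trans W1.
pose p := c / W ^+ K.
have /andP [p0 p1] := frac01 K W1 c01.
have pp : 0 < p by rewrite divr_gt0 // exprn_gt0.
have Hm : forall m, hyp step w P T (m * L1)%N ((1 - p) ^+ m) W.
  elim=> [|m IH].
    by move=> s r _; rewrite mul0n add0n expr0; apply: surv_le1.
  rewrite mulSnr exprS.
  apply: (hyp_step bsB c01 G1 W1) => //.
  by rewrite exprn_ge0 // subr_ge0.
have Hn : forall n, (surv step P T n x0 <= ((1 - p) ^+ (n %/ L1))%:E)%E.
  by move=> n; rewrite {1}(divn_eq n L1); exact: Hm.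
rewrite /expected_tau; apply: lime_le.
  by apply: is_cvg_ereal_nneg_natsum => n _; apply: surv_ge0.
apply: nearW => N.
apply: (@le_trans _ _ (\sum_(0 <= n < N) ((1 - p) ^+ (n %/ L1))%:E)%E).
  by apply: lee_sum => k _; exact: Hn.
rewrite sumEFin lee_fin.
have g0 : forall k, 0 <= (1 - p) ^+ (k %/ L1).
  by move=> k; rewrite exprn_ge0 // subr_ge0.
apply: (@le_trans _ _ (\sum_(0 <= k < N * L1) (1 - p) ^+ (k %/ L1))).
  rewrite [X in _ <= X](big_cat_nat _ (n := N)) //= ?leq_pmulr // lerDl.
  by apply: sumr_ge0 => k _.
rewrite block_sum //.
have pp1 : 0 < p <= 1 by rewrite pp p1.
apply: le_trans (ler_wpM2l (ler0n _ _) (geom_sum N pp1)) _.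
rewrite /p invf_div le_eqVlt; apply/orP; left; apply/eqP; ring.

Qed.
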